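(* Let $H$ be a connected simple matroid of rank $3$ and let $a,b\in E(H)$ (possibly $a=b$). Then there is a $4$-element circuit of $H$ containing $a$ and $b$, or $H$ is the parallel connection of two lines with base point $a$ or with base point $b$.
   Context: A line is a rank-$2$ flat; the parallel connection is the usual matroid parallel connection along a common base point. *)

(* Defs.v *)
From mathcomp Require Import all_boot.
Set Implicit Arguments. Unset Strict Implicit. Unset Printing Implicit Defensive.

Record matroid (E : finType) := Matroid {
  indep : {set E} -> bool;
  indep0 : indep set0;
  indep_subset : forall X Y : {set E}, Y \subset X -> indep X -> indep Y;
  indep_aug : forall X Y : {set E}, indep X -> indep Y -> #|X| < #|Y| ->
      exists2 e, e \in Y :\: X & indep (e |: X)
}.

Section MatroidDefs.
Variables (E : finType) (M : matroid E).

Definition circuit (C : {set E}) : bool :=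
  ~~ indep M C && [forall D : {set E}, (D \proper C) ==> indep M D].

Definition rank (X : {set E}) : nat :=
  \max_(Y in powerset X | indep M Y) #|Y|.

Definition mrank : nat := rank setT.

Definition flat (F : {set E}) : Prop :=
  forall e, e \notin F -> rank F < rank (e |: F).

Definition line (L : {set E}) : Prop := flat L /\ rank L = 2.

(* simple: no loops and no parallel pairs, i.e. all sets of size <= 2
   are independent *)
Definition simple : Prop := forall X : {set E}, #|X| <= 2 -> indep M X.

Definition connected : Prop :=
  forall e f : E, e != f -> exists C, [/\ circuit C, e \in C & f \in C].

(* M is the parallel connection, with base point p, of the two lines
   M|L1 and M|L2 (E = L1 u L2, L1 n L2 = {p}); the circuits of the
   parallel connection P(M1,M2) are (Oxley, Sec. 7.1) the circuits of M1,
   the circuits of M2, and the sets (C1 - p) u (C2 - p) with Ci a circuit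
   of Mi containing p. The circuits of M|L are the circuits of M inside L. *)
Definition parallel_connection_of_lines (p : E) : Prop :=
  exists L1 L2 : {set E},
    [/\ line L1, line L2, L1 :|: L2 = setT, L1 :&: L2 = [set p] &
      forall X : {set E}, circuit X <->
        [\/ circuit X /\ X \subset L1,
            circuit X /\ X \subset L2 |
            exists C1 C2 : {set E},
              [/\ circuit C1 /\ C1 \subset L1 /\ p \in C1,
                  circuit C2 /\ C2 \subset L2 /\ p \in C2 &
                  X = (C1 :\ p) :|: (C2 :\ p)]]].

End MatroidDefs.

(* Main.v *)
Require Import Defs.
From mathcomp Require Import all_boot.
From mathcomp Require Import zify.
Set Implicit Arguments. Unset Strict Implicit. Unset Printing Implicit Defensive.

Section S.
Variables (E : finType) (H : matroid E).
Hypothesis Hs : simple H.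
Hypothesis Hr : mrank H = 3.

Definition col (x y z : E) := ~~ indep H [set x; y; z].
Definition ln (u v : E) := [set z | [|| z == u, z == v | col u v z]].

Lemma set3C1 (x y z : E) : [set y; x; z] = [set x; y; z].
Proof. by apply/setP => w; rewrite !inE; case: (w == x); case: (w == y); case: (w == z). Qed.
Lemma set3C2 (x y z : E) : [set x; z; y] = [set x; y; z].
Proof. by apply/setP => w; rewrite !inE; case: (w == x); case: (w == y); case: (w == z). Qed.
Lemma set3U (x y z : E) : z |: [set x; y] = [set x; y; z].
Proof. by apply/setP => w; rewrite !inE; case: (w == x); case: (w == y); case: (w == z). Qed.

Lemma in3E (w x y z : E) : (w \in [set x; y; z]) = [|| w == x, w == y | w == z].
Proof. by rewrite !inE -?orbA. Qed.

Lemma sub3 (S : {set E}) x y z : x \in S -> y \in S -> z \in S -> [set x; y; z] \subset S.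
Proof. by move=> xS yS zS; apply/subsetP => w; rewrite !inE -?orbA; case/or3P => /eqP ->. Qed.

Lemma colC1 x y z : col y x z = col x y z.
Proof. by rewrite /col set3C1. Qed.
Lemma colC2 x y z : col x z y = col x y z.
Proof. by rewrite /col set3C2. Qed.

Lemma card3 (x y z : E) : x != y -> x != z -> y != z -> #|[set x; y; z]| = 3.
Proof.
move=> xy xz yz.
by rewrite -set3U cardsU1 cards2 xy !inE negb_or (eq_sym z x) (eq_sym z y) xz yz.
Qed.

Lemma indep2 (u v : E) : indep H [set u; v].
Proof. apply: Hs; rewrite cards2; by case: (u != v). Qed.

Lemma inln1 u v : u \in ln u v. Proof. by rewrite inE eqxx. Qed.
Lemma inln2 u v : v \in ln u v. Proof. by rewrite inE eqxx orbT. Qed.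
Lemma ln_sym u v : ln u v = ln v u.
Proof. by apply/setP => w; rewrite !inE colC1 orbA (orbC (w == u)) -orbA. Qed.
Lemma colln u v w : col u v w -> w \in ln u v.
Proof. by move=> c; rewrite inE c !orbT. Qed.

Lemma lnA u v (Y : {set E}) : u != v -> Y \subset ln u v -> indep H Y -> #|Y| <= 2.
Proof.
move=> uv sY iY; rewrite leqNgt; apply/negP => gY.
have lt : #|[set u; v]| < #|Y| by rewrite cards2 uv.
have [e /setDP [eY eN] ie] := indep_aug (indep2 u v) iY lt.
move: (subsetP sY e eY); rewrite inE; case/or3P => [/eqP ?|/eqP ?|c].
- by subst; rewrite !inE eqxx in eN.
- by subst; rewrite !inE eqxx orbT in eN.
- by move: c; rewrite /col -set3U ie.
Qed.

Lemma A3 u v x y z : u != v -> x \in ln u v -> y \in ln u v -> z \in ln u v ->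
  y != z -> x \in ln y z.
Proof.
move=> uv xL yL zL yz; rewrite inE.
case: eqP => //= /eqP xy; case: eqP => //= /eqP xz.
apply/negP => i.
have := lnA uv (sub3 yL zL xL) i.
by rewrite card3 // eq_sym.
Qed.

Lemma lnC u v p q : u != v -> p \in ln u v -> q \in ln u v -> p != q ->
  ln p q \subset ln u v.
Proof.
move=> uv pL qL pq; apply/subsetP => w wpq.
case wL: (w \in ln u v) => //.
have wu : w != u by apply/negP => /eqP e; rewrite e inln1 in wL.
have wv : w != v by apply/negP => /eqP e; rewrite e inln2 in wL.
have i3 : indep H [set u; v; w].
  by move: wL; rewrite inE (negbTE wu) (negbTE wv) /= /col => /negbFE.
have lt : #|[set p; q]| < #|[set u; v; w]| by rewrite cards2 pq card3 // eq_sym.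
have [e /setDP [eY eN] ie] := indep_aug (indep2 p q) i3 lt.
have eL : e \in ln p q.
  move: eY; rewrite in3E; case/or3P => /eqP ->; last by [].
  - by apply: (A3 uv) => //; apply: inln1.
  - by apply: (A3 uv) => //; apply: inln2.
move: eN; rewrite !inE negb_or => /andP [ep eq].
by move: eL; rewrite inE (negbTE ep) (negbTE eq) /= /col -set3U ie.
Qed.

Lemma Dep3 (D : {set E}) u v w : #|D| = 3 -> ~~ indep H D -> u \in D -> v \in D -> w \in D ->
  u != v -> w \in ln u v.
Proof.
move=> D3 nI uD vD wD uv; rewrite inE.
case: eqP => //= /eqP wu; case: eqP => //= /eqP wv.
have /eqP e : [set u; v; w] == D.
  rewrite eqEcard D3 card3 // 1?eq_sym // leqnn andbT.
  exact: sub3.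
by rewrite /col e.
Qed.


Lemma rank_ge (X Y : {set E}) : Y \subset X -> indep H Y -> #|Y| <= rank H X.
Proof.
move=> sY iY; rewrite /rank.
by apply: (leq_bigmax_cond (F := fun Y : {set E} => #|Y|)); rewrite powersetE sY iY.
Qed.

Lemma rank_le (X : {set E}) k :
  (forall Y : {set E}, Y \subset X -> indep H Y -> #|Y| <= k) -> rank H X <= k.
Proof.
move=> h; rewrite /rank; apply/bigmax_leqP => Y /andP [].
by rewrite powersetE; apply: h.
Qed.

Lemma indep_le3 (Y : {set E}) : indep H Y -> #|Y| <= 3.
Proof. by move=> iY; rewrite -Hr; apply: rank_ge => //; apply: subsetT. Qed.

Lemma line_ln u v : u != v -> line H (ln u v).
Proof.
move=> uv.
have r2 : rank H (ln u v) = 2.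
  apply/eqP; rewrite eqn_leq; apply/andP; split.
    by apply: rank_le => Y sY iY; apply: lnA sY iY.
  have := rank_ge (X := ln u v) (Y := [set u; v]) _ (indep2 u v).
  rewrite cards2 uv; apply.
  by apply/subsetP => w; rewrite !inE; case/orP => /eqP ->; rewrite eqxx ?orbT.
split => // e eN; rewrite r2.
have i3 : indep H [set u; v; e].
  by move: eN; rewrite inE negb_or negb_or /col negbK => /andP [_ /andP [_ ->]].
have eu : e != u by apply/negP => /eqP ee; rewrite ee inln1 in eN.
have ev : e != v by apply/negP => /eqP ee; rewrite ee inln2 in eN.
have := rank_ge (X := e |: ln u v) _ i3; rewrite card3 1?eq_sym // 1?eq_sym //; apply.
by apply: sub3; rewrite !inE ?eqxx ?inln1 ?inln2 ?orbT.
Qed.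

Lemma exists_out u v : u != v -> exists x, x \notin ln u v.
Proof.
move=> uv; case: (boolP [exists x, x \notin ln u v]) => [/existsP // | ].
rewrite negb_exists => /forallP h; exfalso.
have : rank H setT <= 2.
  apply: rank_le => Y _ iY; apply: (lnA uv) iY.
  by apply/subsetP => z _; move: (h z); rewrite negbK.
by rewrite -/(mrank H) Hr.
Qed.

Lemma circ_dep (C : {set E}) : circuit H C -> ~~ indep H C.
Proof. by case/andP. Qed.

Lemma circ_proper (C D : {set E}) : circuit H C -> D \proper C -> indep H D.
Proof. by case/andP => _ /forallP /(_ D) /implyP. Qed.

Lemma circ_ge3 (C : {set E}) : circuit H C -> 3 <= #|C|.
Proof.
move=> cC; rewrite ltnNge; apply/negP => /Hs i.
by move: (circ_dep cC); rewrite i.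
Qed.

Lemma circ_le4 (C : {set E}) : circuit H C -> #|C| <= 4.
Proof.
move=> cC.
have /card_gt0P [e eC] : 0 < #|C| by apply: leq_trans (circ_ge3 cC).
have := indep_le3 (circ_proper cC (properD1 eC)).
by rewrite (cardsD1 e C) eC add1n.
Qed.

Lemma circuit3 (C : {set E}) : #|C| = 3 -> ~~ indep H C -> circuit H C.
Proof.
move=> C3 nI; apply/andP; split => //; apply/forallP => D; apply/implyP.
by move/proper_card; rewrite C3 => lt; apply: Hs.
Qed.

Lemma circuit4 (C : {set E}) : #|C| = 4 ->
  (forall D : {set E}, D \subset C -> #|D| = 3 -> indep H D) -> circuit H C.
Proof.
move=> C4 h; apply/andP; split.
  by apply/negP => /indep_le3; rewrite C4.
apply/forallP => D; apply/implyP; rewrite properEcard C4 => /andP [sD].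
rewrite ltnS leq_eqVlt => /orP [/eqP D3|lt]; first by apply: h.
by apply: Hs.
Qed.

Lemma sub3of4 (D X : {set E}) : D \subset X -> #|D| = 3 -> #|X| = 4 ->
  exists2 e, e \in X & D = X :\ e.
Proof.
move=> sD D3 X4.
have /subsetPn [e eX eD] : ~~ (X \subset D).
  by apply/negP => /subset_leq_card; rewrite D3 X4.
exists e => //; apply/eqP; rewrite eqEcard.
have : #|X| = (e \in X) + #|X :\ e| by apply: cardsD1.
rewrite eX X4 add1n => [[<-]]; rewrite D3 leqnn andbT.
apply/subsetP => z zD; rewrite !inE (subsetP sD z zD) andbT.
by apply/negP => /eqP ze; move: eD; rewrite -ze zD.
Qed.

Lemma circ_in_line (C : {set E}) u v : u != v -> C \subset ln u v -> circuit H C -> #|C| = 3.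
Proof.
move=> uv sC cC; apply/eqP; rewrite eqn_leq circ_ge3 // andbT.
have /card_gt0P [e eC] : 0 < #|C| by apply: leq_trans (circ_ge3 cC).
have := lnA uv _ (circ_proper cC (properD1 eC)).
rewrite (cardsD1 e C) eC add1n ltnS; apply.
by apply: subset_trans sC; apply: subsetDl.
Qed.

Lemma dep_in_line (C : {set E}) u v : u != v -> C \subset ln u v -> #|C| = 3 -> ~~ indep H C.
Proof. by move=> uv sC C3; apply/negP => /(lnA uv sC); rewrite C3. Qed.

Lemma mixed u1 v1 u2 v2 (D : {set E}) p q : u1 != v1 -> u2 != v2 -> #|D| = 3 ->
  D \subset ln u1 v1 :|: ln u2 v2 -> p \in D -> p \notin ln u2 v2 ->
  q \in D -> q \notin ln u1 v1 -> indep H D.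
Proof.
move=> uv1 uv2 D3 sD pD pN qD qN; apply/idPn => nI.
have pL : p \in ln u1 v1.
  by move: (subsetP sD p pD); rewrite inE (negbTE pN) orbF.
have qL : q \in ln u2 v2.
  by move: (subsetP sD q qD); rewrite inE (negbTE qN).
have pq : p != q by apply/negP => /eqP e; move: qN; rewrite -e pL.
have : #|D :\ q :\ p| = 1.
  have h1 := cardsD1 q D; have h2 := cardsD1 p (D :\ q).
  have pDq : p \in D :\ q by rewrite !inE pq pD.
  rewrite qD D3 h2 pDq in h1.
  by move: h1; rewrite !add1n => [[]].
move/eqP/cards1P => [r rE].
have : r \in D :\ q :\ p by rewrite rE inE.
rewrite !inE => /andP [rp /andP [rq rD]].
have pr : p != r by rewrite eq_sym.
have qr : q != r by rewrite eq_sym.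
move: (subsetP sD r rD); rewrite inE => /orP [rL|rL].
- have := Dep3 D3 nI pD rD qD pr.
  move/(subsetP (lnC uv1 pL rL pr)) => qL1.
  by rewrite qL1 in qN.
- have := Dep3 D3 nI qD rD pD qr.
  move/(subsetP (lnC uv2 qL rL qr)) => pL2.
  by rewrite pL2 in pN.
Qed.

Lemma pc u1 v1 u2 v2 c : u1 != v1 -> u2 != v2 ->
  ln u1 v1 :|: ln u2 v2 = setT -> ln u1 v1 :&: ln u2 v2 = [set c] ->
  parallel_connection_of_lines H c.
Proof.
move=> uv1 uv2 hU hI.
have cI : c \in ln u1 v1 :&: ln u2 v2 by rewrite hI set11.
have cL1 : c \in ln u1 v1 by case/setIP: cI.
have cL2 : c \in ln u2 v2 by case/setIP: cI.
have sU : forall X : {set E}, X \subset ln u1 v1 :|: ln u2 v2 by move=> X; rewrite hU subsetT.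
have inI : forall z, z \in ln u1 v1 -> z \in ln u2 v2 -> z = c.
  by move=> z a b; apply/set1P; rewrite -hI inE a b.
exists (ln u1 v1), (ln u2 v2); split => //; try exact: line_ln.
move=> X; split.
- move=> cX.
  have le4 := circ_le4 cX; have ge3 := circ_ge3 cX.
  case: (boolP (X \subset ln u1 v1)) => [s1|n1]; first by constructor 1.
  case: (boolP (X \subset ln u2 v2)) => [s2|n2]; first by constructor 2.
  have n3 : #|X| != 3.
    apply/negP => /eqP X3.
    have [q qX qN] := subsetPn n1; have [p pX pN] := subsetPn n2.
    by move: (circ_dep cX); rewrite (mixed uv1 uv2 X3 (sU X) pX pN qX qN).
  have X4 : #|X| = 4 by lia.
  constructor 3.
  have Y1p : X :&: ln u1 v1 \proper X.
    rewrite properEneq subsetIl andbT; apply/negP => /eqP e.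
    by move: n1; rewrite -e subsetIr.
  have Y2p : X :&: ln u2 v2 \proper X.
    rewrite properEneq subsetIl andbT; apply/negP => /eqP e.
    by move: n2; rewrite -e subsetIr.
  have Y1le := lnA uv1 (subsetIr X _) (circ_proper cX Y1p).
  have Y2le := lnA uv2 (subsetIr X _) (circ_proper cX Y2p).
  have hUY : (X :&: ln u1 v1) :|: (X :&: ln u2 v2) = X by rewrite -setIUr hU setIT.
  have hIY : (X :&: ln u1 v1) :&: (X :&: ln u2 v2) = X :&: [set c].
    by rewrite setIACA setIid hI.
  have := cardsUI (X :&: ln u1 v1) (X :&: ln u2 v2); rewrite hUY hIY X4 => hc.
  have cX' : c \notin X.
    apply/negP => cX0.
    have : 0 < #|X :&: [set c]| by apply/card_gt0P; exists c; rewrite !inE cX0 eqxx.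
    lia.
  have e1 : #|X :&: ln u1 v1| = 2 by lia.
  have e2 : #|X :&: ln u2 v2| = 2 by lia.
  have cY1 : c \notin X :&: ln u1 v1 by rewrite inE (negbTE cX').
  have cY2 : c \notin X :&: ln u2 v2 by rewrite inE (negbTE cX').
  exists (c |: (X :&: ln u1 v1)), (c |: (X :&: ln u2 v2)); split.
  + have s : c |: (X :&: ln u1 v1) \subset ln u1 v1.
      by apply/subsetP => z /setU1P [->|/setIP [_ //]].
    have C3 : #|c |: (X :&: ln u1 v1)| = 3 by rewrite cardsU1 cY1 e1.
    by split; [apply: circuit3 => //; apply: dep_in_line s C3 | split => //; apply: setU11].
  + have s : c |: (X :&: ln u2 v2) \subset ln u2 v2.
      by apply/subsetP => z /setU1P [->|/setIP [_ //]].
    have C3 : #|c |: (X :&: ln u2 v2)| = 3 by rewrite cardsU1 cY2 e2.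
    by split; [apply: circuit3 => //; apply: dep_in_line s C3 | split => //; apply: setU11].
  + by rewrite !setU1K.
- case => [[cX _]|[cX _]|[C1 [C2 [[c1 [s1 cc1]] [c2 [s2 cc2]] ->]]]] //.
  have C13 := circ_in_line uv1 s1 c1; have C23 := circ_in_line uv2 s2 c2.
  have Y1c : #|C1 :\ c| = 2.
    by have := cardsD1 c C1; rewrite cc1 C13 add1n => [[]].
  have Y2c : #|C2 :\ c| = 2.
    by have := cardsD1 c C2; rewrite cc2 C23 add1n => [[]].
  have dis : (C1 :\ c) :&: (C2 :\ c) = set0.
    apply/eqP; rewrite -subset0; apply/subsetP => z /setIP [/setD1P [zc z1] /setD1P [_ z2]].
    by move: zc; rewrite (inI z (subsetP s1 z z1) (subsetP s2 z z2)) eqxx.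
  have X4 : #|(C1 :\ c) :|: (C2 :\ c)| = 4.
    by have := cardsUI (C1 :\ c) (C2 :\ c); rewrite dis cards0 Y1c Y2c addn0.
  apply: circuit4 => // D sD D3.
  have nD2 : ~~ (D \subset ln u2 v2).
    apply/negP => sD2.
    have : D \subset C2 :\ c.
      apply/subsetP => z zD; move: (subsetP sD z zD) => /setUP [/setD1P [zc z1]|//].
      by move: zc; rewrite (inI z (subsetP s1 z z1) (subsetP sD2 z zD)) eqxx.
    by move/subset_leq_card; rewrite D3 Y2c.
  have nD1 : ~~ (D \subset ln u1 v1).
    apply/negP => sD1.
    have : D \subset C1 :\ c.
      apply/subsetP => z zD; move: (subsetP sD z zD) => /setUP [//|/setD1P [zc z2]].
      by move: zc; rewrite (inI z (subsetP sD1 z zD) (subsetP s2 z z2)) eqxx.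
    by move/subset_leq_card; rewrite D3 Y1c.
  have [p pD pN] := subsetPn nD2; have [q qD qN] := subsetPn nD1.
  exact: mixed uv1 uv2 D3 (sU D) pD pN qD qN.
Qed.

Lemma colR u v w : col u v w = col v w u.
Proof.
rewrite /col; congr (~~ indep H _).
apply/setP => t; rewrite !in3E.
by case: (t == u); case: (t == v); case: (t == w).
Qed.

Lemma ln_col u v w : w \in ln u v -> w != u -> w != v -> col u v w.
Proof. by rewrite inE => /or3P [/eqP->|/eqP->|//]; rewrite eqxx. Qed.

Lemma ncol x y z : ~~ col x y z -> indep H [set x; y; z].
Proof. by rewrite negbK. Qed.

Lemma GL u v z (C : {set E}) : u != v -> z \notin ln u v -> circuit H C -> z \in C ->
  exists2 y, y \in C & (y != z) && (y \notin ln u v).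
Proof.
move=> uv zN cC zC.
case: (boolP [exists y, [&& y \in C, y != z & y \notin ln u v]]).
  by case/existsP => y /and3P [yC yz yN]; exists y => //; rewrite yz yN.
rewrite negb_exists => /forallP h; exfalso.
have sC : C :\ z \subset ln u v.
  apply/subsetP => y /setD1P [yz yC]; move: (h y); rewrite yC yz /= negbK //.
have le2 := lnA uv sC (circ_proper cC (properD1 zC)).
have ge3 := circ_ge3 cC.
have := cardsD1 z C; rewrite zC add1n => hC.
have /cards2P [p [q [pq e]]] : #|C :\ z| == 2 by apply/eqP; lia.
have pC : p \in C :\ z by rewrite e !inE eqxx.
have qC : q \in C :\ z by rewrite e !inE eqxx orbT.
have C3 : #|C| = 3 by lia.
move: (pC) (qC); rewrite !inE => /andP [_ pC'] /andP [_ qC'].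
have := Dep3 C3 (circ_dep cC) pC' qC' zC pq.
move/(subsetP (lnC uv (subsetP sC p pC) (subsetP sC q qC) pq)) => zL.
by rewrite zL in zN.
Qed.

Lemma four_card (a b x y : E) : a != b -> a != x -> a != y -> b != x -> b != y -> x != y ->
  #|[set a; b; x; y]| = 4.
Proof.
move=> ab ax ay bx bY xy.
have -> : [set a; b; x; y] = y |: [set a; b; x].
  apply/setP => t; rewrite !inE.
  by case: (t == a); case: (t == b); case: (t == x); case: (t == y).
by rewrite cardsU1 card3 // in3E !(eq_sym y) (negbTE ay) (negbTE bY) (negbTE xy).
Qed.

Lemma fourcirc (a b x y : E) : a != b -> a != x -> a != y -> b != x -> b != y -> x != y ->
  indep H [set b; x; y] -> indep H [set a; x; y] -> indep H [set a; b; y] ->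
  indep H [set a; b; x] -> circuit H [set a; b; x; y].
Proof.
move=> ab ax ay bx bY xy i1 i2 i3 i4.
have X4 := four_card ab ax ay bx bY xy.
apply: circuit4 => // D sD D3.
have [e eX ->] := sub3of4 sD D3 X4.
have hX : e \in [set a; b; x; y] -> [\/ e = a, e = b, e = x | e = y].
  by rewrite !inE -!orbA => /or4P [] /eqP ->; [constructor 1|constructor 2|constructor 3|constructor 4].
case: (hX eX) => ->.
- apply: (indep_subset _ i1); apply/subsetP => t; rewrite !inE.
  by case: (t == a); case: (t == b); case: (t == x); case: (t == y).
- apply: (indep_subset _ i2); apply/subsetP => t; rewrite !inE.
  by case: (t == a); case: (t == b); case: (t == x); case: (t == y).
- apply: (indep_subset _ i3); apply/subsetP => t; rewrite !inE.
  by case: (t == a); case: (t == b); case: (t == x); case: (t == y).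
- apply: (indep_subset _ i4); apply/subsetP => t; rewrite !inE.
  by case: (t == a); case: (t == b); case: (t == x); case: (t == y).
Qed.

Lemma neq_in_out (x y : E) (S : {set E}) : x \in S -> y \notin S -> x != y.
Proof. by move=> xS yN; apply/negP => /eqP e; rewrite -e xS in yN. Qed.

Lemma eq_sym_neq (x y : E) : x != y -> y != x.
Proof. by rewrite eq_sym. Qed.

Lemma classify (c d x0 y0 : E) : c != d -> x0 \notin ln c d -> y0 \notin ln c d ->
  x0 != y0 -> c \in ln x0 y0 ->
  (forall x y, x \notin ln c d -> y \notin ln c d -> x != y -> (c \in ln x y) || (d \in ln x y)) ->
  forall z, z \notin ln c d -> z \in ln c x0.
Proof.
move=> cd x0N y0N xy cin h z zN.
have cx0 : c != x0 := neq_in_out (inln1 c d) x0N.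
have cy0 : c != y0 := neq_in_out (inln1 c d) y0N.
have dx0 : d != x0 := neq_in_out (inln2 c d) x0N.
have dy0 : d != y0 := neq_in_out (inln2 c d) y0N.
have dz : d != z := neq_in_out (inln2 c d) zN.
have cz : c != z := neq_in_out (inln1 c d) zN.
have y0M : y0 \in ln c x0.
  by apply: colln; rewrite colR; apply: ln_col.
case: (boolP (z \in ln c x0)) => // zM; exfalso.
have zx0 : z != x0 by apply/negP => /eqP e; rewrite e inln2 in zM.
have zy0 : z != y0 by apply/negP => /eqP e; rewrite e y0M in zM.
have d1 : d \in ln x0 z.
  move: (h x0 z x0N zN (eq_sym_neq zx0)) => /orP [c1|//].
  have : z \in ln c x0 by apply: colln; rewrite colR; apply: ln_col => //; rewrite eq_sym.
  by rewrite (negbTE zM).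
have d2 : d \in ln y0 z.
  move: (h y0 z y0N zN (eq_sym_neq zy0)) => /orP [c1|//].
  have : z \in ln c y0 by apply: colln; rewrite colR; apply: ln_col => //; rewrite eq_sym.
  by move/(subsetP (lnC cx0 (inln1 c x0) y0M cy0)); rewrite (negbTE zM).
have x0L : x0 \in ln d z.
  by apply: colln; rewrite -colR colC2; apply: ln_col => //; rewrite eq_sym.
have y0L : y0 \in ln d z.
  by apply: colln; rewrite -colR colC2; apply: ln_col => //; rewrite eq_sym.
have := subsetP (lnC dz x0L y0L xy) c cin => cdz.
have := A3 dz (inln2 d z) cdz (inln1 d z) cd.
by rewrite (negbTE zN).
Qed.

Lemma pc_from (c d x0 : E) : c != d -> x0 \notin ln c d ->
  (forall z, z \notin ln c d -> z \in ln c x0) -> parallel_connection_of_lines H c.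
Proof.
move=> cd x0N h.
have cx0 : c != x0 := neq_in_out (inln1 c d) x0N.
apply: (pc cd cx0).
  apply/setP => z; rewrite inE in_setT.
  by case: (boolP (z \in ln c d)) => // /h ->.
apply/setP => z; rewrite in_setI in_set1; apply/andP/eqP => [[z1 z2]|->]; last by rewrite !inln1.
apply/eqP; apply/negP => /negP zc.
have := A3 cx0 (inln2 c x0) (inln1 c x0) z2 (eq_sym_neq zc).
move/(subsetP (lnC cd (inln1 c d) z1 (eq_sym_neq zc))) => x0L.
by rewrite x0L in x0N.
Qed.

Lemma two_out (a b : E) : a != b -> connected H ->
  exists x0 y0, [/\ x0 \notin ln a b, y0 \notin ln a b & x0 != y0].
Proof.
move=> ab Hc.
have [x0 x0N] := exists_out ab.
have ax0 : a != x0 := neq_in_out (inln1 a b) x0N.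
have [C [cC aC xC]] := Hc _ _ ax0.
have [y yC /andP [yx yN]] := GL ab x0N cC xC.
by exists x0, y; split => //; rewrite eq_sym.
Qed.

Lemma good4 (a b x y : E) : a != b -> x \notin ln a b -> y \notin ln a b -> x != y ->
  a \notin ln x y -> b \notin ln x y -> circuit H [set a; b; x; y] /\ #|[set a; b; x; y]| = 4.
Proof.
move=> ab xN yN xy aN bN.
have ax := neq_in_out (inln1 a b) xN; have ay := neq_in_out (inln1 a b) yN.
have bx := neq_in_out (inln2 a b) xN; have bY := neq_in_out (inln2 a b) yN.
split; last exact: four_card.
apply: fourcirc => //; apply: ncol; apply/negP => c.
- by move: c; rewrite colR => /colln; rewrite (negbTE bN).
- by move: c; rewrite colR => /colln; rewrite (negbTE aN).
- by move/colln: c; rewrite (negbTE yN).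
- by move/colln: c; rewrite (negbTE xN).
Qed.

Lemma special (a b x0 y0 : E) : connected H -> a != b -> x0 \notin ln a b ->
  y0 \notin ln a b -> x0 != y0 -> (forall z, z \notin ln b a -> z \in ln b x0) ->
  exists C : {set E}, [/\ circuit H C, #|C| = 4, a \in C & a \in C].
Proof.
move=> Hc ab x0N y0N xy h.
have bx0 := neq_in_out (inln2 a b) x0N.
have ax0 := neq_in_out (inln1 a b) x0N; have ay0 := neq_in_out (inln1 a b) y0N.
have hL : forall z, z \notin ln a b -> z \in ln b x0 by move=> z; rewrite ln_sym; apply: h.
have y0M := hL y0 y0N.
have aM : a \notin ln b x0.
  apply/negP => aM.
  have := A3 bx0 (inln2 b x0) (inln1 b x0) aM (eq_sym_neq ab).
  by rewrite -ln_sym (negbTE x0N).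
have [C [cC aC xC]] := Hc _ _ ax0.
have [y yC /andP [ya yM]] := GL bx0 aM cC aC.
have yL : y \in ln a b.
  by case: (boolP (y \in ln a b)) => // /hL; rewrite (negbTE yM).
have ay := eq_sym_neq ya.
have yx0 := neq_in_out yL x0N; have yy0 := neq_in_out yL y0N.
have sM := subsetP (lnC bx0 (inln2 b x0) y0M xy).
have sL := subsetP (lnC ab (inln1 a b) yL ay).
exists [set a; y; x0; y0]; split; last first.
- by rewrite !inE eqxx.
- by rewrite !inE eqxx.
- exact: four_card.
apply: fourcirc => //; apply: ncol; apply/negP => c.
- by move: c; rewrite colR => /colln /sM; rewrite (negbTE yM).
- by move: c; rewrite colR => /colln /sM; rewrite (negbTE aM).
- by move/colln: c => /sL; rewrite (negbTE y0N).
- by move/colln: c => /sL; rewrite (negbTE x0N).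
Qed.

End S.

Theorem lemma3p1 (E : finType) (H : matroid E) (a b : E) :
  connected H -> simple H -> mrank H = 3 ->
  (exists C : {set E}, [/\ circuit H C, #|C| = 4, a \in C & b \in C]) \/
  parallel_connection_of_lines H a \/ parallel_connection_of_lines H b.
Proof.
move=> Hc Hs Hr.
have main : forall b', a != b' -> (exists C : {set E}, [/\ circuit H C, #|C| = 4, a \in C & b' \in C])
    \/ parallel_connection_of_lines H a \/
    [/\ exists x0, exists y0, [/\ x0 \notin ln H a b', y0 \notin ln H a b', x0 != y0 &
          forall z, z \notin ln H b' a -> z \in ln H b' x0] & parallel_connection_of_lines H b'].
  move=> b' ab.
  have [x0 [y0 [x0N y0N xy]]] := two_out Hs Hr ab Hc.
  case: (boolP [exists x, exists y, [&& x \notin ln H a b', y \notin ln H a b', x != y,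
           a \notin ln H x y & b' \notin ln H x y]]).
    case/existsP => x /existsP [y /and5P [xN yN xy' aN bN]].
    have [cX X4] := good4 Hs Hr ab xN yN xy' aN bN.
    by left; exists [set a; b'; x; y]; split => //; rewrite !inE eqxx ?orbT.
  rewrite negb_exists => /forallP hn.
  have h : forall x y, x \notin ln H a b' -> y \notin ln H a b' -> x != y ->
      (a \in ln H x y) || (b' \in ln H x y).
    move=> x y xN yN xy'; move: (hn x); rewrite negb_exists => /forallP /(_ y).
    by rewrite xN yN xy' /= negb_and !negbK.
  right; case: (boolP (a \in ln H x0 y0)) => [ain|bin].
    by left; apply: (pc_from Hs Hr ab x0N); apply: (classify Hs ab x0N y0N xy ain h).
  have bin' : b' \in ln H x0 y0 by move: (h x0 y0 x0N y0N xy); rewrite (negbTE bin).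
  rewrite ln_sym in x0N y0N.
  have h' : forall x y, x \notin ln H b' a -> y \notin ln H b' a -> x != y ->
      (b' \in ln H x y) || (a \in ln H x y).
    by move=> x y; rewrite (ln_sym H b' a) orbC; apply: h.
  have hz := classify Hs (eq_sym_neq ab) x0N y0N xy bin' h'.
  right; split; last exact: (pc_from Hs Hr (eq_sym_neq ab) x0N hz).
  by exists x0, y0; split => //; rewrite ln_sym.
case ab: (a == b); last first.
  have := main b (negbT ab); case => [|[|[]]]; auto.
move/eqP: ab => <-.
have [b' ab'] : exists b', a != b'.
  case: (boolP [exists b', a != b']) => [/existsP //|]; rewrite negb_exists => /forallP hn.
  exfalso.
  have : rank H setT <= 1.
    apply: rank_le => Y _ _; rewrite -(cards1 a); apply: subset_leq_card.
    by apply/subsetP => z _; move: (hn z); rewrite negbK inE eq_sym.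
  by rewrite -/(mrank H) Hr.
case: (main b' ab') => [[C [cC C4 aC _]]|[pa|[[x0 [y0 [x0N y0N xy hz]]] _]]].
- by left; exists C; split.
- by right; left.
- left; exact: (special Hs Hr Hc ab' x0N y0N xy hz).
Qed.
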